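(* Assume $\mathfrak g$ is noncompact and has no nonzero proper $\sigma$-stable ideals. If $Y\in\mathfrak t^+$, then $|\alpha(Y)|<\pi$ for all $\alpha\in\Sigma$.
   Context: Let $G$ be a connected real semisimple Lie group with Lie algebra $\mathfrak g$. Let $\sigma$ be an involution of $G$ and $\theta$ a Cartan involution with $\sigma\theta=\theta\sigma$; the same letters denote the induced involutions of $\mathfrak g$. Let $\mathfrak g=\mathfrak k\oplus\mathfrak m$ and $\mathfrak g=\mathfrak h\oplus\mathfrak q$ be the $\pm1$-eigenspace decompositions for $\theta$ and $\sigma$. Let $\mathfrak t$ be a maximal abelian subspace of $\mathfrak k\cap\mathfrak q$. For a linear form $\alpha:\mathfrak t\to i\mathbb R$ put - $\mathfrak g_\mathbb C(\mathfrak t,\alpha)=\{X\in\mathfrak g_\mathbb C\mid[Y,X]=\alpha(Y)X\ \forall Y\in\mathfrak t\}$, - $\mathfrak m_\mathbb C(\mathfrak t,\alpha)=\mathfrak g_\mathbb C(\mathfrak t,\alpha)\cap\mathfrak m_\mathbb C$. Let $\Sigma=\{\alpha\neq0\mid\mathfrak g_\mathbb C(\mathfrak t,\alpha)\ne\{0\}\}$ and $\Sigma(\mathfrak m_\mathbb C,\mathfrak t)=\{\alpha\ne0\mid\mathfrak m_\mathbb C(\mathfrak t,\alpha)\ne\{0\}\}$. Put $\mathfrak t^+=\{Y\in\mathfrak t\mid|\alpha(Y)|<\pi/2\ \forall\alpha\in\Sigma(\mathfrak m_\mathbb C,\mathfrak t)\}$. *)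

(* Defs.v *)
From HB Require Import structures.
From mathcomp Require Import all_boot all_order all_algebra.
From mathcomp Require Import reals trigo.
Set Implicit Arguments. Unset Strict Implicit. Unset Printing Implicit Defensive.
Import Order.TTheory GRing.Theory Num.Theory.
Local Open Scope ring_scope.

Section LieDefs.
Variables (R : realType) (n : nat).
Notation V := 'rV[R]_n.
Variable br : V -> V -> V.

Definition linmap (f : V -> V) := forall (a : R) (x y : V), f (a *: x + y) = a *: f x + f y.

Definition lie_bracket :=
  (forall a x y z, br (a *: x + y) z = a *: br x z + br y z) /\
  (forall a x y z, br z (a *: x + y) = a *: br z x + br z y) /\
  (forall x, br x x = 0) /\
  (forall x y z, br x (br y z) + br y (br z x) + br z (br x y) = 0).

(* ad X as a matrix acting on row vectors: v *m ad X = [X, v] *)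
Definition ad (X : V) : 'M[R]_n := lin1_mx (br X).

Definition killing (X Y : V) : R := \tr (ad X *m ad Y).

Definition derived (U : {vspace V}) : {vspace V} :=
  <<[seq br x y | x <- vbasis U, y <- vbasis U]>>%VS.

Definition is_ideal (I : {vspace V}) := forall X Y, Y \in I -> br X Y \in I.

Definition solvable_sub (I : {vspace V}) := exists k, iter k derived I = 0%VS.

Definition semisimple := forall I : {vspace V}, is_ideal I -> solvable_sub I -> I = 0%VS.

(* compact (semisimple) Lie algebra: Killing form negative definite *)
Definition noncompact := ~ (forall X : V, X != 0 -> killing X X < 0).

Definition lie_automorphism (f : V -> V) :=
  linmap f /\ (forall X Y, f (br X Y) = br (f X) (f Y)) /\ bijective f.

Definition lie_involution (f : V -> V) := lie_automorphism f /\ (forall X, f (f X) = X).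

Definition cartan_involution (theta : V -> V) :=
  lie_involution theta /\ (forall X : V, X != 0 -> 0 < - killing X (theta X)).

Definition no_sigma_stable_ideals (sigma : V -> V) :=
  forall I : {vspace V}, is_ideal I -> (forall Y, Y \in I -> sigma Y \in I) ->
    I = 0%VS \/ I = fullv.

Variables (sigma theta : V -> V).

Definition in_k (X : V) := theta X = X.
Definition in_m (X : V) := theta X = - X.
Definition in_q (X : V) := sigma X = - X.

Definition abelian_sub (U : {vspace V}) := forall X Y, X \in U -> Y \in U -> br X Y = 0.
Definition sub_kq (U : {vspace V}) := forall X, X \in U -> in_k X /\ in_q X.

Definition max_abelian_kq (t : {vspace V}) :=
  sub_kq t /\ abelian_sub t /\
  forall U : {vspace V}, (t <= U)%VS -> sub_kq U -> abelian_sub U -> U = t.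

Variable t : {vspace V}.

(* A linear form alpha : t -> iR is encoded as alpha = i * beta with beta : t -> R
   (values of beta outside t are irrelevant).  An element of g_C is A + iB with
   A, B in g; [Y, A + iB] = i beta(Y) (A + iB) unfolds to
   [Y,A] = - beta(Y) B and [Y,B] = beta(Y) A. *)
Definition form_on_t (beta : V -> R) :=
  forall (a : R) Y Z, Y \in t -> Z \in t -> beta (a *: Y + Z) = a * beta Y + beta Z.

Definition nonzero_on_t (beta : V -> R) := exists2 Y, Y \in t & beta Y != 0.

Definition in_rootspace (beta : V -> R) (A B : V) :=
  forall Y, Y \in t -> br Y A = - (beta Y *: B) /\ br Y B = beta Y *: A.

(* alpha = i beta is in Sigma *)
Definition is_root (beta : V -> R) :=
  form_on_t beta /\ nonzero_on_t beta /\
  exists A B, (A != 0 \/ B != 0) /\ in_rootspace beta A B.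

(* alpha = i beta is in Sigma(m_C, t) *)
Definition is_m_root (beta : V -> R) :=
  form_on_t beta /\ nonzero_on_t beta /\
  exists A B, (A != 0 \/ B != 0) /\ in_m A /\ in_m B /\ in_rootspace beta A B.

(* |alpha(Y)| = |beta(Y)| *)
Definition in_tplus (Y : V) :=
  Y \in t /\ forall beta, is_m_root beta -> `|beta Y| < pi / 2.

End LieDefs.

(* Main.v *)
Require Import Defs.
From HB Require Import structures.
From mathcomp Require Import all_boot all_order all_algebra.
From mathcomp Require Import reals trigo.
From mathcomp Require Import complex.
From mathcomp Require Import lra.
From Stdlib Require Import Classical.
Set Implicit Arguments. Unset Strict Implicit. Unset Printing Implicit Defensive.
Import Order.TTheory GRing.Theory Num.Theory.
Local Open Scope ring_scope.


Section LinFun.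
Variables (R : realType) (n : nat).
Notation V := 'rV[R]_n.
Variable f : V -> V.
Hypothesis hf : linmap f.
Definition flin := f.
Lemma flin_lin : linear flin.
Proof. move=> a x y; exact: hf. Qed.
HB.instance Definition _ := GRing.isLinear.Build R V V *:%R flin flin_lin.
Lemma mulmx_lin1 (v : V) : v *m lin1_mx f = f v.
Proof. by rewrite (mul_rV_lin1 flin). Qed.
Lemma lmD x y : f (x + y) = f x + f y. Proof. exact: (linearD flin). Qed.
Lemma lmZ a x : f (a *: x) = a *: f x. Proof. exact: (linearZZ flin). Qed.
Lemma lm0 : f 0 = 0. Proof. exact: (linear0 flin). Qed.
Lemma lmN x : f (- x) = - f x. Proof. exact: (linearN flin). Qed.
Lemma lmB x y : f (x - y) = f x - f y. Proof. exact: (linearB flin). Qed.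
Lemma lm_sum I r (P : pred I) (F : I -> V) :
  f (\sum_(i <- r | P i) F i) = \sum_(i <- r | P i) f (F i).
Proof. exact: (linear_sum flin). Qed.
End LinFun.

Section Lie.
Variables (R : realType) (n : nat).
Notation V := 'rV[R]_n.
Variable br : V -> V -> V.
Hypothesis Hbr : lie_bracket br.

Lemma linr X : linmap (br X).
Proof. by case: Hbr => _ [h _] a x y; rewrite h. Qed.
Lemma linl Z : linmap (fun X => br X Z).
Proof. by case: Hbr => h _ a x y; rewrite h. Qed.

Lemma brDr X x y : br X (x + y) = br X x + br X y. Proof. by rewrite (lmD (linr X)). Qed.
Lemma brZr X a x : br X (a *: x) = a *: br X x. Proof. by rewrite (lmZ (linr X)). Qed.
Lemma br0r X : br X 0 = 0. Proof. by rewrite (lm0 (linr X)). Qed.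
Lemma brNr X x : br X (- x) = - br X x. Proof. by rewrite (lmN (linr X)). Qed.
Lemma brBr X x y : br X (x - y) = br X x - br X y. Proof. by rewrite (lmB (linr X)). Qed.
Lemma brDl x y Z : br (x + y) Z = br x Z + br y Z. Proof. by rewrite (lmD (linl Z)). Qed.
Lemma brZl a x Z : br (a *: x) Z = a *: br x Z. Proof. by rewrite (lmZ (linl Z)). Qed.
Lemma br0l Z : br 0 Z = 0. Proof. by rewrite (lm0 (linl Z)). Qed.
Lemma brNl x Z : br (- x) Z = - br x Z. Proof. by rewrite (lmN (linl Z)). Qed.
Lemma brBl x y Z : br (x - y) Z = br x Z - br y Z. Proof. by rewrite (lmB (linl Z)). Qed.
Lemma br_sumr X I r (P : pred I) (F : I -> V) :
  br X (\sum_(i <- r | P i) F i) = \sum_(i <- r | P i) br X (F i).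
Proof. by rewrite (lm_sum (linr X)). Qed.
Lemma br_suml Z I r (P : pred I) (F : I -> V) :
  br (\sum_(i <- r | P i) F i) Z = \sum_(i <- r | P i) br (F i) Z.
Proof. by rewrite (lm_sum (linl Z)). Qed.

Lemma brxx x : br x x = 0. Proof. by case: Hbr => _ [_ [h _]]. Qed.
Lemma brC x y : br x y = - br y x.
Proof.
have := brxx (x + y); rewrite brDl !brDr !brxx add0r addr0 => /eqP.
by rewrite addr_eq0 => /eqP.
Qed.
Lemma jacobi x y z : br x (br y z) + br y (br z x) + br z (br x y) = 0.
Proof. by case: Hbr => _ [_ [_ h]]. Qed.
Lemma br_br X Y Z : br (br X Y) Z = br X (br Y Z) - br Y (br X Z).
Proof.
have J := jacobi X Y Z; rewrite (brC Z (br X Y)) (brC Z X) brNr in J.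
by apply/eqP; rewrite eq_sym -subr_eq0 J.
Qed.

Lemma ad_mul X v : v *m ad br X = br X v.
Proof. by rewrite /ad (mulmx_lin1 (linr X)). Qed.

Lemma mx_ext (A B : 'M[R]_n) : (forall v : V, v *m A = v *m B) -> A = B.
Proof. by move=> h; apply/row_matrixP => i; rewrite !rowE h. Qed.

Lemma ad_br X Y : ad br (br X Y) = ad br Y *m ad br X - ad br X *m ad br Y.
Proof.
by apply: mx_ext => v; rewrite mulmxBr !mulmxA !ad_mul br_br.
Qed.

Lemma adD X Y : ad br (X + Y) = ad br X + ad br Y.
Proof. by apply: mx_ext => v; rewrite mulmxDr !ad_mul brDl. Qed.
Lemma adZ a X : ad br (a *: X) = a *: ad br X.
Proof. by apply: mx_ext => v; rewrite -scalemxAr !ad_mul brZl. Qed.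


Lemma killingC X Y : killing br X Y = killing br Y X.
Proof. by rewrite /killing mxtrace_mulC. Qed.

Lemma killing_inv X U W : killing br (br X U) W = - killing br U (br X W).
Proof.
rewrite /killing !ad_br mulmxBl mulmxBr !linearB /= opprB -!mulmxA.
by rewrite [\tr (ad br X *m _)]mxtrace_mulC -!mulmxA.
Qed.
End Lie.


Section Span.
Variables (R : realType) (n : nat).
Notation V := 'rV[R]_n.
Lemma span_ind (s : seq V) (f : V -> V) (U : {vspace V}) : linmap f ->
  (forall g, g \in s -> f g \in U) -> forall Y, Y \in <<s>>%VS -> f Y \in U.
Proof.
move=> hf hg Y /(@coord_span _ _ _ (in_tuple s)) ->.
rewrite (lm_sum hf); apply: memv_suml => i _; rewrite (lmZ hf); apply: memvZ.
by apply: hg; apply: mem_nth.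
Qed.
End Span.

Section Theta.
Variables (R : realType) (n : nat).
Notation V := 'rV[R]_n.
Variable br : V -> V -> V.
Hypothesis Hbr : lie_bracket br.
Variable theta : V -> V.
Hypothesis Hth : cartan_involution br theta.

Lemma th_lin : linmap theta. Proof. by case: Hth => [[[]]]. Qed.
Lemma th_br X Y : theta (br X Y) = br (theta X) (theta Y).
Proof. by case: Hth => [[[_ []]]]. Qed.
Lemma thth X : theta (theta X) = X. Proof. by case: Hth => [[_]]. Qed.
Lemma th_pos X : X != 0 -> 0 < - killing br X (theta X). Proof. by case: Hth => _; apply. Qed.

Definition Th := lin1_mx theta.
Lemma Th_mul v : v *m Th = theta v.
Proof. by rewrite /Th (mulmx_lin1 th_lin). Qed.
Lemma ThTh : Th *m Th = 1%:M.
Proof. by apply: (mx_ext) => v; rewrite mulmxA !Th_mul thth mulmx1. Qed.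
Lemma ad_th X : ad br (theta X) = Th *m ad br X *m Th.
Proof.
apply: mx_ext => v. rewrite !mulmxA Th_mul. rewrite !(ad_mul Hbr). rewrite Th_mul th_br thth //.
Qed.
Lemma ad_th_comm X : theta X = X -> ad br X *m Th = Th *m ad br X.
Proof.
move=> hX; have E := ad_th X; rewrite hX in E.
by rewrite {1}E -!mulmxA ThTh mulmx1.
Qed.
Lemma killing_th X Y : killing br (theta X) (theta Y) = killing br X Y.
Proof.
rewrite /killing !ad_th.
have -> : Th *m ad br X *m Th *m (Th *m ad br Y *m Th) = Th *m (ad br X *m ad br Y) *m Th.
  have T := ThTh. rewrite !mulmxA -(mulmxA _ Th Th) T mulmx1 //.
by rewrite mxtrace_mulC !mulmxA ThTh mul1mx.
Qed.

Lemma killingDl X Y Z : killing br (X + Y) Z = killing br X Z + killing br Y Z.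
Proof. by rewrite /killing (adD Hbr) mulmxDl mxtraceD. Qed.
Lemma killingZl a X Z : killing br (a *: X) Z = a * killing br X Z.
Proof. by rewrite /killing (adZ Hbr) -scalemxAl mxtraceZ. Qed.
Lemma killingNl X Z : killing br (- X) Z = - killing br X Z.
Proof. by rewrite -scaleN1r killingZl mulN1r. Qed.

Definition ip X Y := - killing br X (theta Y).
Lemma ipC X Y : ip X Y = ip Y X.
Proof. by rewrite /ip -killing_th thth killingC. Qed.
Lemma ipDl X Y Z : ip (X + Y) Z = ip X Z + ip Y Z.
Proof. by rewrite /ip killingDl opprD. Qed.
Lemma ipZl a X Z : ip (a *: X) Z = a * ip X Z.
Proof. by rewrite /ip killingZl mulrN. Qed.
Lemma ipNl X Z : ip (- X) Z = - ip X Z.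
Proof. by rewrite /ip killingNl. Qed.
Lemma ip_pos X : X != 0 -> 0 < ip X X. Proof. exact: th_pos. Qed.
Lemma ip_ge0 X : 0 <= ip X X.
Proof.
have [->|/ip_pos/ltW //] := eqVneq X 0.
by rewrite /ip -(scale0r 0) killingZl mul0r oppr0.
Qed.

Lemma ip_skew Y u : theta Y = Y -> ip (br Y u) u = 0.
Proof.
move=> hY.
have e : ip (br Y u) u = - ip (br Y u) u.
  rewrite {1}/ip (killing_inv Hbr) -{1}hY -th_br opprK.
  by rewrite /ip -killing_th thth killingC opprK.
by move/eqP: e; rewrite -addr_eq0 -mulr2n mulrn_eq0 /= => /eqP.
Qed.

(* real form of an eigenvector with eigenvalue r + i s *)
Lemma imag_eig Y a b r s : theta Y = Y -> (a != 0) || (b != 0) ->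
  br Y a = r *: a - s *: b -> br Y b = s *: a + r *: b -> r = 0.
Proof.
move=> hY ab ha hb.
have h1 := ip_skew a hY; have h2 := ip_skew b hY.
rewrite ha ipDl ipNl !ipZl in h1; rewrite hb ipDl !ipZl in h2.
have : r * (ip a a + ip b b) = 0.
  rewrite (ipC b a) in h1; lra.
move/eqP; rewrite mulf_eq0 => /orP[/eqP //|].
rewrite paddr_eq0 ?ip_ge0 // => /andP[/eqP ea /eqP eb].
case/orP: ab => [/ip_pos|/ip_pos]; rewrite ?ea ?eb ltxx //.
Qed.

End Theta.


Section Ideal.
Variables (R : realType) (n : nat).
Notation V := 'rV[R]_n.
Variable br : V -> V -> V.
Hypothesis Hbr : lie_bracket br.
Variable theta sigma : V -> V.
Hypothesis Hth : cartan_involution br theta.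
Hypothesis Hsig : lie_involution br sigma.
Hypothesis Hcomm : forall X, sigma (theta X) = theta (sigma X).
Hypothesis Hss : semisimple br.
Hypothesis Hnc : noncompact br.
Hypothesis Hns : no_sigma_stable_ideals br sigma.

Notation inm Z := (theta Z = - Z).

Lemma sig_lin : linmap sigma. Proof. by case: Hsig => [[]]. Qed.
Lemma sig_br X Y : sigma (br X Y) = br (sigma X) (sigma Y).
Proof. by case: Hsig => [[_ []]]. Qed.

Lemma thD x y : theta (x + y) = theta x + theta y. Proof. exact: (lmD (th_lin Hth)). Qed.
Lemma thB x y : theta (x - y) = theta x - theta y. Proof. exact: (lmB (th_lin Hth)). Qed.
Lemma thN x : theta (- x) = - theta x. Proof. exact: (lmN (th_lin Hth)). Qed.
Lemma thZ a x : theta (a *: x) = a *: theta x. Proof. exact: (lmZ (th_lin Hth)). Qed.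

Definition kpart X := 2^-1 *: (X + theta X).
Definition mpart X := 2^-1 *: (X - theta X).
Lemma kpartP X : theta (kpart X) = kpart X.
Proof. by rewrite /kpart thZ thD (thth Hth) addrC. Qed.
Lemma mpartP X : inm (mpart X).
Proof. by rewrite /mpart thZ thB (thth Hth) -scalerN opprB. Qed.
Lemma kmpart X : X = kpart X + mpart X.
Proof.
rewrite /kpart /mpart -scalerDr addrACA subrr addr0 -mulr2n -scaler_nat scalerA.
by rewrite mulVf ?scale1r // pnatr_eq0.
Qed.

Lemma br_km U Z : theta U = U -> inm Z -> inm (br U Z).
Proof. by move=> hU hZ; rewrite (th_br Hth) hU hZ (brNr Hbr). Qed.

Definition mb := [seq v - theta v | v <- vbasis (fullv : {vspace V})].
Definition Isp : {vspace V} := <<mb ++ [seq br x y | x <- mb, y <- mb]>>%VS.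

Lemma mb_m g : g \in mb -> inm g.
Proof. by case/mapP => v _ ->; rewrite thB (thth Hth) opprB. Qed.

Lemma m_span Z : inm Z -> Z \in <<mb>>%VS.
Proof.
move=> hZ.
have e : Z = 2^-1 *: (Z - theta Z).
  by rewrite hZ opprK -mulr2n -scaler_nat scalerA mulVf ?scale1r // pnatr_eq0.
rewrite e; apply: memvZ.
rewrite {1 2}(coord_vbasis (memvf Z)) (lm_sum (th_lin Hth)) -sumrB.
apply: memv_suml => i _; rewrite thZ -scalerBr; apply: memvZ; apply: memv_span.
by apply: map_f; apply: mem_nth; rewrite size_tuple.
Qed.

Lemma m_I Z : inm Z -> Z \in Isp.
Proof.
move=> /m_span; apply: (span_ind (f := id)) => [a x y //|g gm].
by apply: memv_span; rewrite mem_cat gm.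
Qed.

Lemma mm_I Z W : inm Z -> inm W -> br Z W \in Isp.
Proof.
move=> /m_span hZ /m_span hW.
apply: (span_ind (f := fun Z => br Z W)) hZ => [|g gm]; first exact: linl.
apply: (span_ind (f := br g)) hW => [|g' gm']; first exact: linr.
by apply: memv_span; rewrite mem_cat; apply/orP; right; apply: allpairs_f.
Qed.

Lemma LmZ X Z : inm Z -> br X Z \in Isp.
Proof.
move=> hZ; rewrite (kmpart X) (brDl Hbr); apply: memvD.
  by apply: m_I; apply: br_km => //; exact: kpartP.
by apply: mm_I => //; exact: mpartP.
Qed.

Lemma br_br2 X x y : br X (br x y) = br (br X x) y - br (br X y) x.
Proof. by rewrite (br_br Hbr) (brC Hbr (br X y) x) opprK subrK. Qed.

Lemma gen_cases (P : V -> Prop) : (forall g, inm g -> P g) ->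
  (forall x y, inm x -> inm y -> P (br x y)) ->
  forall g, g \in mb ++ [seq br x y | x <- mb, y <- mb] -> P g.
Proof.
move=> h1 h2 g; rewrite mem_cat => /orP[/mb_m|]; first exact: h1.
by case/allpairsP => -[x y] /= [xm ym ->]; apply: h2; apply: mb_m.
Qed.

Lemma I_ideal : is_ideal br Isp.
Proof.
move=> X Y; apply: (span_ind (f := br X)); first exact: linr.
apply: gen_cases => [g gm|x y xm ym]; first exact: LmZ.
by rewrite br_br2; apply: memvB; apply: LmZ.
Qed.

Lemma I_sig Y : Y \in Isp -> sigma Y \in Isp.
Proof.
apply: (span_ind (f := sigma)); first exact: sig_lin.
have sm g : inm g -> inm (sigma g).
  by move=> hg; rewrite -Hcomm hg (lmN sig_lin).
apply: gen_cases => [g gm|x y xm ym]; first by apply: m_I; apply: sm.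
by rewrite sig_br; apply: mm_I; apply: sm.
Qed.

Lemma exists_m : exists Z, inm Z /\ Z != 0.
Proof.
apply: NNPP => H; apply: Hnc => X hX.
have eX : theta X = X.
  have := mpartP X; case: (eqVneq (mpart X) 0) => [e _|ne hm].
    move: e; rewrite /mpart => /eqP; rewrite scaler_eq0 invr_eq0 pnatr_eq0 /=.
    by rewrite subr_eq0 => /eqP <-.
  by case: H; exists (mpart X).
by have := th_pos Hth hX; rewrite eX oppr_gt0.
Qed.

Lemma I_full : Isp = fullv.
Proof.
case: (Hns I_ideal I_sig) => // I0.
case: exists_m => Z [hZ nZ]; have := m_I hZ; rewrite I0 memv0 => /eqP e.
by rewrite e eqxx in nZ.
Qed.

Lemma centr0 X : (forall Z, inm Z -> br X Z = 0) -> X = 0.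
Proof.
move=> hX.
have hall Y : br X Y = 0.
  have : br X Y \in (0%VS : {vspace V}).
    apply: (span_ind (f := br X)); first exact: linr.
      apply: gen_cases => [g gm|x y xm ym]; first by rewrite hX ?memv0.
      by rewrite br_br2 !hX // !(br0l Hbr) subr0 mem0v.
    by rewrite -/Isp I_full memvf.
  by rewrite memv0 => /eqP.
have Lid : is_ideal br <[X]>%VS.
  move=> W Y /vlineP[k ->]; rewrite (brZr Hbr) (brC Hbr W X) hall oppr0 scaler0.
  exact: mem0v.
have Lsol : solvable_sub br <[X]>%VS.
  exists 1%N => /=; apply/eqP; rewrite -subv0; apply/span_subvP => z.
  case/allpairsP => -[x y] /= [/vbasis_mem/vlineP[a ->] /vbasis_mem/vlineP[b ->] ->].
  by rewrite (brZl Hbr) (brZr Hbr) (brxx Hbr) !scaler0 memv0.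
have := Hss Lid Lsol => /eqP; rewrite -subv0 => /subvP/(_ X (memv_line X)).
by rewrite memv0 => /eqP.
Qed.
End Ideal.

Local Open Scope complex_scope.


Section Cplx.
Variable R : realType.
Notation C := (R[i]).
Notation cRe := (@complex.Re R).
Notation cIm := (@complex.Im R).
Lemma ReD (a b : C) : cRe (a + b) = cRe a + cRe b. Proof. by case: a => ? ?; case: b => ? ?; simpc => /=. Qed.
Lemma ImD (a b : C) : cIm (a + b) = cIm a + cIm b. Proof. by case: a => ? ?; case: b => ? ?; simpc => /=. Qed.
Lemma ReM (a : C) (k : R) : cRe (a * k%:C) = cRe a * k.
Proof. by case: a => x y; simpc => /=. Qed.
Lemma ImM (a : C) (k : R) : cIm (a * k%:C) = cIm a * k.
Proof. by case: a => x y; simpc => /=. Qed.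
Lemma ReMl (e a : C) : cRe (e * a) = cRe e * cRe a - cIm e * cIm a.
Proof. by case: e => ? ?; case: a => ? ?; simpc => /=. Qed.
Lemma ImMl (e a : C) : cIm (e * a) = cIm e * cRe a + cRe e * cIm a.
Proof. by case: e => ? ?; case: a => ? ?; simpc => /=; rewrite addrC. Qed.
Lemma ReN (a : C) : cRe (- a) = - cRe a. Proof. by case: a => ? ?; simpc => /=. Qed.
Lemma ImN (a : C) : cIm (- a) = - cIm a. Proof. by case: a => ? ?; simpc => /=. Qed.
Lemma Re0 : cRe (0 : C) = 0. Proof. by []. Qed.
Lemma Im0 : cIm (0 : C) = 0. Proof. by []. Qed.
Lemma C_eq0 (a : C) : (a == 0) = (cRe a == 0) && (cIm a == 0).
Proof. by case: a => x y; rewrite eq_complex. Qed.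
Lemma Re_real (k : R) : cRe (k%:C) = k. Proof. by []. Qed.
Lemma Im_real (k : R) : cIm (k%:C) = 0. Proof. by []. Qed.
Lemma Re_iM (k : C) : cRe ('i%C * k) = - cIm k. Proof. by case: k => ? ?; simpc => /=. Qed.
Lemma Im_iM (k : C) : cIm ('i%C * k) = cRe k. Proof. by case: k => ? ?; simpc => /=. Qed.
End Cplx.

Section CMx.
Variable R : realType.
Notation C := (R[i]).
Notation cRe := (@complex.Re R).
Notation cIm := (@complex.Im R).
Definition lift p q (M : 'M[R]_(p, q)) : 'M[C]_(p, q) := map_mx (real_complex R) M.
Definition re p q (M : 'M[C]_(p, q)) : 'M[R]_(p, q) := map_mx cRe M.
Definition im p q (M : 'M[C]_(p, q)) : 'M[R]_(p, q) := map_mx cIm M.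

Lemma re_mul p q r (x : 'M[C]_(p, q)) (M : 'M[R]_(q, r)) : re (x *m lift M) = re x *m M.
Proof.
apply/matrixP => i j; rewrite !mxE (big_morph _ (@ReD R) (@Re0 R)).
by apply: eq_bigr => k _; rewrite !mxE ReM.
Qed.
Lemma im_mul p q r (x : 'M[C]_(p, q)) (M : 'M[R]_(q, r)) : im (x *m lift M) = im x *m M.
Proof.
apply/matrixP => i j; rewrite !mxE (big_morph _ (@ImD R) (@Im0 R)).
by apply: eq_bigr => k _; rewrite !mxE ImM.
Qed.
Lemma re_scale p q (e : C) (x : 'M[C]_(p, q)) : re (e *: x) = cRe e *: re x - cIm e *: im x.
Proof. by apply/matrixP => i j; rewrite !mxE ReMl. Qed.
Lemma im_scale p q (e : C) (x : 'M[C]_(p, q)) : im (e *: x) = cIm e *: re x + cRe e *: im x.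
Proof. by apply/matrixP => i j; rewrite !mxE ImMl. Qed.
Lemma reN p q (x : 'M[C]_(p, q)) : re (- x) = - re x.
Proof. by apply/matrixP => i j; rewrite !mxE ReN. Qed.
Lemma imN p q (x : 'M[C]_(p, q)) : im (- x) = - im x.
Proof. by apply/matrixP => i j; rewrite !mxE ImN. Qed.
Lemma reD p q (x y : 'M[C]_(p, q)) : re (x + y) = re x + re y.
Proof. by apply/matrixP => i j; rewrite !mxE ReD. Qed.
Lemma imD p q (x y : 'M[C]_(p, q)) : im (x + y) = im x + im y.
Proof. by apply/matrixP => i j; rewrite !mxE ImD. Qed.
Lemma re_lift p q (M : 'M[R]_(p, q)) : re (lift M) = M.
Proof. by apply/matrixP => i j; rewrite !mxE. Qed.
Lemma im_lift p q (M : 'M[R]_(p, q)) : im (lift M) = 0.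
Proof. by apply/matrixP => i j; rewrite !mxE. Qed.
Lemma re_ilift p q (M : 'M[R]_(p, q)) : re ('i *: lift M) = 0.
Proof. by apply/matrixP => i j; rewrite !mxE Re_iM /= oppr0. Qed.
Lemma im_ilift p q (M : 'M[R]_(p, q)) : im ('i *: lift M) = M.
Proof. by apply/matrixP => i j; rewrite !mxE Im_iM. Qed.
Lemma mxC_eq0 p q (x : 'M[C]_(p, q)) : (x == 0) = (re x == 0) && (im x == 0).
Proof.
apply/eqP/andP => [->|[/eqP hr /eqP hi]].
  by split; apply/eqP/matrixP => i j; rewrite !mxE.
apply/matrixP => i j; apply/eqP; rewrite mxE C_eq0.
have := congr1 (fun M : 'M[R]_(p, q) => M i j) hr; have := congr1 (fun M : 'M[R]_(p, q) => M i j) hi.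
by rewrite !mxE => -> ->; rewrite eqxx.
Qed.
Lemma liftD p q (M N : 'M[R]_(p, q)) : lift (M + N) = lift M + lift N.
Proof. exact: map_mxD. Qed.
Lemma liftB p q (M N : 'M[R]_(p, q)) : lift (M - N) = lift M - lift N.
Proof. exact: map_mxB. Qed.
Lemma liftZ p q a (M : 'M[R]_(p, q)) : lift (a *: M) = a%:C *: lift M.
Proof. exact: map_mxZ. Qed.
Lemma liftM p q r (M : 'M[R]_(p, q)) (N : 'M[R]_(q, r)) : lift (M *m N) = lift M *m lift N.
Proof. exact: map_mxM. Qed.
Lemma lift1 p : lift (1%:M : 'M[R]_p) = 1%:M.
Proof. exact: map_mx1. Qed.

Definition ev n (x : 'rV[C]_n) (M : 'M[C]_n) : C :=
  if [pick j | x 0 j != 0] is Some j then (x *m M) 0 j / x 0 j else 0.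
Lemma evP n (x : 'rV[C]_n) M c : x != 0 -> x *m M = c *: x -> ev x M = c.
Proof.
move=> nx e; rewrite /ev; case: pickP => [j hj|h].
  by rewrite e mxE mulfK.
case/eqP: nx; apply/rowP => j; have := h j; rewrite mxE /= => /negbFE/eqP //.
Qed.
End CMx.


Section Eig.
Variables (R : realType) (n : nat).
Notation V := 'rV[R]_n.
Notation C := (R[i]).
Notation cRe := (@complex.Re R).
Notation cIm := (@complex.Im R).
Variable br : V -> V -> V.
Hypothesis Hbr : lie_bracket br.
Variable theta : V -> V.
Hypothesis Hth : cartan_involution br theta.
Variable t : {vspace V}.
Hypothesis htk : forall Y, Y \in t -> theta Y = Y.

Notation adc Y := (lift (ad br Y)).

Lemma eig_bound (x : 'rV[C]_n) Y (l : C) : x != 0 -> x *m lift (Th theta) = - x ->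
  (forall Y', Y' \in t -> exists c, x *m adc Y' = c *: x) ->
  in_tplus br theta t Y -> x *m adc Y = l *: x ->
  cRe l = 0 /\ `|cIm l| < pi / 2.
Proof.
move=> nx xm hall [Yt hY] hl.
pose a := re x; pose b := im x.
have ab : (a != 0) || (b != 0).
  by move: nx; rewrite mxC_eq0 negb_and.
have evE Y' : Y' \in t -> x *m adc Y' = ev x (adc Y') *: x.
  by move=> hY'; case: (hall Y' hY') => c hc; rewrite (evP nx hc).
have eqa Y' : Y' \in t -> br Y' a = cRe (ev x (adc Y')) *: a - cIm (ev x (adc Y')) *: b.
  by move=> hY'; rewrite -(ad_mul Hbr) /a -re_mul evE // re_scale.
have eqb Y' : Y' \in t -> br Y' b = cIm (ev x (adc Y')) *: a + cRe (ev x (adc Y')) *: b.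
  by move=> hY'; rewrite -(ad_mul Hbr) /b -im_mul evE // im_scale.
have re0 Y' : Y' \in t -> cRe (ev x (adc Y')) = 0.
  by move=> hY'; apply: (imag_eig Hbr Hth (htk hY') ab (eqa Y' hY') (eqb Y' hY')).
have lE : l = ev x (adc Y) by rewrite (evP nx hl).
split; first by rewrite lE re0.
have [e0|ne0] := eqVneq (cIm l) 0.
  by rewrite e0 normr0 divr_gt0 ?pi_gt0.
pose g Y' := cIm (ev x (adc Y')).
have -> : cIm l = g Y by rewrite /g -lE.
apply: hY; split.
  move=> al Y' Z hY' hZ; rewrite /g.
  have hs : al *: Y' + Z \in t by rewrite memvD ?memvZ.
  have : x *m adc (al *: Y' + Z) = (al%:C * ev x (adc Y') + ev x (adc Z)) *: x.
    rewrite (adD Hbr) (adZ Hbr) liftD liftZ mulmxDr -scalemxAr !evE //.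
    by rewrite scalerDl scalerA.
  move/(evP nx) => ->; rewrite ImD; congr (_ + _); case: (ev x (adc Y')) => u v; by simpc.
split; first by exists Y => //; rewrite /g -lE.
exists a, b; split; first by case/orP: ab => ?; [left|right].
split.
  by rewrite /in_m -(Th_mul Hth) /a -re_mul xm reN.
split.
  by rewrite /in_m -(Th_mul Hth) /b -im_mul xm imN.
move=> Y' hY'; rewrite eqa // eqb // re0 // !scale0r sub0r addr0 //.
Qed.
End Eig.


Section Joint.
Variables (R : realType) (n : nat).
Notation V := 'rV[R]_n.
Notation C := (R[i]).
Variable br : V -> V -> V.
Hypothesis Hbr : lie_bracket br.
Variable theta : V -> V.
Hypothesis Hth : cartan_involution br theta.
Variable t : {vspace V}.
Hypothesis htk : forall Y, Y \in t -> theta Y = Y.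
Hypothesis htab : forall X Y, X \in t -> Y \in t -> br X Y = 0.

Notation adc Y := (lift (ad br Y)).
Notation Thc := (lift (Th theta)).

Lemma ad0 : ad br 0 = 0.
Proof. by apply: mx_ext => v; rewrite (ad_mul Hbr) (br0l Hbr) mulmx0. Qed.

Lemma comm_t X Y : X \in t -> Y \in t -> comm_mx (adc X) (adc Y).
Proof.
move=> hX hY; rewrite /comm_mx -!liftM; congr lift.
have := ad_br Hbr X Y; rewrite htab // ad0 => /esym/eqP; rewrite subr_eq0 => /eqP.
by [].
Qed.
Lemma comm_th X : X \in t -> comm_mx Thc (adc X).
Proof.
by move=> hX; rewrite /comm_mx -!liftM (ad_th_comm Hbr Hth (htk hX)).
Qed.

Definition Kc := kermx (Thc + 1%:M).
Lemma inKc (v : 'rV[C]_n) : (v <= Kc)%MS = (v *m Thc == - v).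
Proof. by rewrite sub_kermx mulmxDr mulmx1 addr_eq0. Qed.

Lemma joint (w : 'rV[C]_n) Y l : Y \in t -> w != 0 -> w *m Thc = - w ->
  w *m adc Y = l *: w ->
  exists x : 'rV[C]_n, [/\ x != 0, x *m Thc = - x, x *m adc Y = l *: x &
    forall Y', Y' \in t -> exists c, x *m adc Y' = c *: x].
Proof.
move=> hY nw wm wl.
pose E := (Kc :&: eigenspace (adc Y) l)%MS.
have wE : (w <= E)%MS.
  rewrite sub_capmx; apply/andP; split; first by rewrite inKc wm.
  by apply/eigenspaceP.
have stE X : X \in t -> stablemx E (adc X).
  move=> hX; rewrite sub_capmx; apply/andP; split.
    apply: submx_trans (submxMr _ (capmxSl _ _)) _.
    apply: comm_mx_stable_ker; apply: comm_mx_sym; apply: comm_mxD.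
      by apply: comm_mx_sym; apply: comm_th.
    exact: comm_mx1.
  apply: submx_trans (submxMr _ (capmxSr _ _)) _.
  by apply: comm_mx_stable_eigenspace; apply: comm_t.
have rE : (0 < \rank E)%N.
  rewrite lt0n mxrank_eq0; apply: contraNneq nw => E0.
  by move: wE; rewrite E0 submx0.
pose As := [seq restrictmx E (adc b) | b <- vbasis t].
have cA : {in As &, forall A B, comm_mx A B}.
  move=> _ _ /mapP[b1 b1t ->] /mapP[b2 b2t ->].
  have h1 := vbasis_mem b1t; have h2 := vbasis_mem b2t.
  have s1 : stablemx (row_base E) (adc b1) by rewrite stablemx_row_base stE.
  have s2 : stablemx (row_base E) (adc b2) by rewrite stablemx_row_base stE.
  by rewrite /comm_mx -(conjmxM s1 s2) -(conjmxM s2 s1) (comm_t h1 h2).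
have [v nv /allP vP] := common_eigenvector rE cA.
pose x := v *m row_base E.
have xE : (x <= E)%MS by rewrite (submx_trans (submxMl _ _)) // eq_row_base.
have nx : x != 0 by rewrite mulmx_free_eq0 ?row_base_free.
have stb b : b \in vbasis t -> exists c, x *m adc b = c *: x.
  move=> hb; have := vP _ (map_f (fun b => restrictmx E (adc b)) hb).
  rewrite (stablemx_restrict _ (stE _ (vbasis_mem hb))) => /sub_rVP.
  by case=> c hc; exists c.
have /andP[xK xEig] : (x <= Kc)%MS && (x <= eigenspace (adc Y) l)%MS.
  by rewrite -sub_capmx.
exists x; split => //.
- by move: xK; rewrite inKc => /eqP.
- by move/eigenspaceP: xEig.
move=> Y' hY'.
rewrite (coord_vbasis hY') (big_morph (ad br) (adD Hbr) ad0).
apply: (big_ind (fun M => exists c, x *m lift M = c *: x)).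
- by exists 0; rewrite /lift map_mx0 mulmx0 scale0r.
- move=> M1 M2 [c1 h1] [c2 h2]; exists (c1 + c2).
  by rewrite liftD mulmxDr h1 h2 scalerDl.
move=> i _; rewrite (adZ Hbr) liftZ -scalemxAr.
have hi : (vbasis t)`_i \in vbasis t by apply: mem_nth; rewrite size_tuple.
have [c hc] := stb _ hi.
by exists ((coord (vbasis t) i Y')%:C * c); rewrite hc scalerA.
Qed.
End Joint.


Lemma chain (F : fieldType) r m (A : 'M[F]_r.+1) (G : 'M[F]_(r.+1, m)) (rs : seq F) :
  forall c0 : 'rV_r.+1, c0 *m G != 0 ->
  c0 *m horner_mx A (\prod_(z <- rs) ('X - z%:P)) *m G = 0 ->
  exists z (c : 'rV_r.+1), [/\ z \in rs, c *m G != 0 & c *m (A - z%:M) *m G = 0].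
Proof.
elim: rs => [|z rs IH] c0 h0 h.
  by move: h; rewrite big_nil rmorph1 mulmx1 => /eqP; rewrite (negbTE h0).
move: h; rewrite big_cons rmorphM rmorphB /= horner_mx_X horner_mx_C mulmxA.
have [e|ne] := eqVneq (c0 *m (A - z%:M) *m G) 0.
  by move=> _; exists z, c0; rewrite mem_head.
move=> h; have [z' [c [z'in cG cz]]] := IH _ ne h.
by exists z', c; rewrite in_cons z'in orbT.
Qed.

Lemma eig_pair (F : closedFieldType) n r (P : 'M[F]_(r, n)) (N Mc : 'M[F]_n) (be : F)
  (z : 'rV_n) :
  row_free P -> stablemx P N -> stablemx P Mc -> (z <= P)%MS -> z *m Mc != 0 ->
  Mc *m N = N *m Mc + be *: Mc ->
  exists l (w u : 'rV_n), [/\ w != 0, (w <= P)%MS & w *m N = l *: w] /\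
     [/\ u != 0, (u <= P)%MS & u *m N = (l + be) *: u].
Proof.
case: r P => [|r] P fP sN sM zP zM rel.
  move: zP; rewrite (flatmx0 P) => /submx0null ez.
  by move: zM; rewrite ez mul0mx eqxx.
pose Nr := conjmx P N.
have NrP : Nr *m P = P *m N by rewrite /Nr /conjmx mulmxKpV.
pose c0 := z *m pinvmx P.
have c0P : c0 *m P = z by rewrite /c0 mulmxKpV.
pose G := P *m Mc.
have [rs ers] := closed_field_poly_normal (char_poly Nr).
have lc : lead_coef (char_poly Nr) = 1 by apply/monicP; exact: char_poly_monic.
rewrite lc scale1r in ers.
have h0 : c0 *m G != 0 by rewrite /G mulmxA c0P.
have h1 : c0 *m horner_mx Nr (\prod_(z <- rs) ('X - z%:P)) *m G = 0.
  by rewrite -ers Cayley_Hamilton mulmx0 mul0mx.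
have [l [c [lin cG cl]]] := chain h0 h1.
have : eigenvalue Nr l by rewrite eigenvalue_root_char ers root_prod_XsubC.
case/eigenvalueP => e eN ne.
exists l, (e *m P), (c *m P *m Mc); split; split.
- by rewrite mulmx_free_eq0.
- exact: submxMl.
- by rewrite -mulmxA -NrP mulmxA eN scalemxAl.
- by rewrite -mulmxA.
- apply: submx_trans sM; exact: submxMr (submxMl _ _).
- have cl' : c *m P *m N *m Mc = l *: (c *m P *m Mc).
    move: cl; rewrite mulmxBr mulmxBl mul_mx_scalar -scalemxAl => /eqP.
    rewrite subr_eq0 => /eqP; rewrite /G => h.
    rewrite mulmxA in h; rewrite -(mulmxA c Nr P) NrP in h.
    by rewrite !mulmxA in h *.
  rewrite -mulmxA rel mulmxDr -scalemxAr !mulmxA cl' scalerDl.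
  by [].
Qed.


Section Aux.
Variables (R : realType) (n : nat).
Notation V := 'rV[R]_n.
Variable br : V -> V -> V.
Hypothesis Hbr : lie_bracket br.
Variable theta : V -> V.
Hypothesis Hth : cartan_involution br theta.

Lemma mpartZ a X : mpart theta (a *: X) = a *: mpart theta X.
Proof. by rewrite /mpart (thZ Hth) -scalerBr !scalerA mulrC. Qed.
Lemma mpartN X : mpart theta (- X) = - mpart theta X.
Proof. by rewrite -scaleN1r mpartZ scaleN1r. Qed.
Lemma br_mpart Y X : theta Y = Y -> br Y (mpart theta X) = mpart theta (br Y X).
Proof.
move=> hY; rewrite /mpart (brZr Hbr) (brBr Hbr); congr (_ *: (_ - _)).
by rewrite (th_br Hth) hY.
Qed.
Lemma mpart0 X : mpart theta X = 0 -> theta X = X.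
Proof.
rewrite /mpart => /eqP; rewrite scaler_eq0 invr_eq0 pnatr_eq0 /=.
by rewrite subr_eq0 => /eqP <-.
Qed.
End Aux.

Theorem lemma1 (R : realType) (n : nat) (br : 'rV[R]_n -> 'rV[R]_n -> 'rV[R]_n)
  (sigma theta : 'rV[R]_n -> 'rV[R]_n) (t : {vspace 'rV[R]_n}) :
  lie_bracket br -> semisimple br ->
  lie_involution br sigma -> cartan_involution br theta ->
  (forall X, sigma (theta X) = theta (sigma X)) ->
  max_abelian_kq br sigma theta t ->
  noncompact br -> no_sigma_stable_ideals br sigma ->
  forall Y : 'rV[R]_n, in_tplus br theta t Y ->
  forall beta : 'rV[R]_n -> R, is_root br t beta -> `|beta Y| < pi.
Proof.
move=> Hbr Hss Hsig Hth Hcomm Hmax Hnc Hns Y hY beta [hform [hnz [A [B [AB hroot]]]]].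
case: Hmax => [hkq [hab _]].
have htk : forall Y, Y \in t -> theta Y = Y by move=> Y' /hkq [].
have htab : forall X Y, X \in t -> Y \in t -> br X Y = 0.
  by move=> X Y' hX hY'; apply: hab.
case: (hY) => Yt hYb.
have pi0 := @pi_gt0 R.
pose Am := mpart theta A; pose Bm := mpart theta B.
have rootm : in_rootspace br t beta Am Bm.
  move=> Y' hY'; case: (hroot Y' hY') => e1 e2.
  rewrite /Am /Bm !(br_mpart Hbr Hth) ?htk // e1 e2 (mpartN Hth) !(mpartZ Hth).
  by [].
have [mcase|kcase] := boolP ((Am != 0) || (Bm != 0)).
  have : is_m_root br theta t beta.
    split=> //; split=> //; exists Am, Bm; split.
      by case/orP: mcase; [left|right].
    by split; [exact: (mpartP Hth A)|split; [exact: (mpartP Hth B)|]].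
  move/hYb => h; lra.
move: kcase; rewrite negb_or !negbK => /andP[/eqP Am0 /eqP Bm0].
have thA := mpart0 Am0; have thB := mpart0 Bm0.
have [Z [Zm ZAB]] : exists Z, theta Z = - Z /\ (br A Z != 0 \/ br B Z != 0).
  apply: NNPP => H.
  have cA : forall Z, theta Z = - Z -> br A Z = 0.
    move=> Z0 hZ; apply/eqP; apply: contraT => nz; case: H; exists Z0; split => //; by left.
  have cB : forall Z, theta Z = - Z -> br B Z = 0.
    move=> Z0 hZ; apply/eqP; apply: contraT => nz; case: H; exists Z0; split => //; by right.
  have eA := centr0 Hbr Hth Hsig Hcomm Hss Hnc Hns cA.
  have eB := centr0 Hbr Hth Hsig Hcomm Hss Hnc Hns cB.
  by case: AB; rewrite ?eA ?eB eqxx.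
pose N := lift (ad br Y).
pose Mc := lift (ad br A) + 'i *: lift (ad br B).
pose be : R[i] := 'i * (beta Y)%:C.
have [eA eB] := hroot Y Yt.
have h1 : ad br A *m ad br Y = ad br Y *m ad br A - beta Y *: ad br B.
  have := ad_br Hbr Y A; rewrite eA -scaleNr (adZ Hbr) => /esym/eqP.
  by rewrite subr_eq scaleNr => /eqP ->; rewrite addrC.
have h2 : ad br B *m ad br Y = ad br Y *m ad br B + beta Y *: ad br A.
  have := ad_br Hbr Y B; rewrite eB (adZ Hbr) => /esym/eqP.
  by rewrite subr_eq => /eqP ->; rewrite addrC.
have bi : be * 'i = - (beta Y)%:C.
  by rewrite /be mulrAC -expr2 sqr_i mulN1r.
have rel : Mc *m N = N *m Mc + be *: Mc.
  rewrite /Mc /N mulmxDl mulmxDr -!scalemxAl -!scalemxAr -!liftM h1 h2 liftB liftD !liftZ.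
  rewrite !scalerDr !scalerA bi scaleNr /be.
  by rewrite addrACA [- _ + _]addrC.
pose P := row_base (Kc theta).
have stK (M : 'M[R[i]]_n) : lift (Th theta) *m M = M *m lift (Th theta) -> stablemx P M.
  move=> h; rewrite stablemx_row_base; apply: comm_mx_stable_ker.
  by rewrite /comm_mx mulmxDl mulmxDr mul1mx mulmx1 h.
have thcN : lift (Th theta) *m N = N *m lift (Th theta).
  exact: (comm_th Hbr Hth htk Yt).
have thcM : lift (Th theta) *m Mc = Mc *m lift (Th theta).
  rewrite /Mc mulmxDl mulmxDr -scalemxAr -scalemxAl -!liftM.
  by rewrite (ad_th_comm Hbr Hth thA) (ad_th_comm Hbr Hth thB).
have inK (v : 'rV[R[i]]_n) : (v <= P)%MS -> v *m lift (Th theta) = - v.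
  by rewrite /P eq_row_base inKc => /eqP.
have zP : (lift Z <= P)%MS.
  by rewrite /P eq_row_base inKc -liftM (Th_mul Hth) Zm /lift map_mxN.
have zM : lift Z *m Mc != 0.
  rewrite /Mc mulmxDr -scalemxAr -!liftM !(ad_mul Hbr) mxC_eq0 reD imD.
  rewrite re_lift re_ilift im_lift im_ilift addr0 add0r negb_and.
  by case: ZAB => ->; rewrite ?orbT.
have [l [w [u [[nw wP wN] [nu uP uN]]]]] :=
  eig_pair (row_base_free _) (stK _ thcN) (stK _ thcM) zP zM rel.
have [x1 [nx1 x1m x1N x1all]] := joint Hbr Hth htk htab Yt nw (inK _ wP) wN.
have [_ hl] := eig_bound Hbr Hth htk nx1 x1m x1all hY x1N.
have [x2 [nx2 x2m x2N x2all]] := joint Hbr Hth htk htab Yt nu (inK _ uP) uN.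
have [_ hlb] := eig_bound Hbr Hth htk nx2 x2m x2all hY x2N.
move: hlb; rewrite ImD /be Im_iM Re_real => hlb.
have := ler_normD (- complex.Im l) (complex.Im l + beta Y).
rewrite addKr normrN => hle.
lra.
Qed.
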